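(* For all $n,k\in\mathbb Z$, \[ \binom{n}{k}_w=\binom{n}{n-k}_{\widehat w}\prod_{j=1}^{k}W(j,n-k), \] where $\widehat w(s,t)=w(t,s)^{-1}$.
   Context: $(w(s,t))_{s,t\in\mathbb Z}$ are commuting invertible variables. Product convention: $\prod_{j=l}^m A_j=A_l\cdots A_m$ if $m>l-1$, $=1$ if $m=l-1$, $=A_{l-1}^{-1}\cdots A_{m+1}^{-1}$ if $m<l-1$. For any such weight family $v$, set $W_v(s,t)=\prod_{j=1}^t v(s,j)$ (and $W=W_w$), and let $\binom{n}{k}_v$ ($n,k\in\mathbb Z$) be the unique family with $\binom{n}{0}_v=\binom{n}{n}_v=1$ for all $n\in\mathbb Z$ and $\binom{n+1}{k}_v=\binom{n}{k}_v+\binom{n}{k-1}_v W_v(k,n+1-k)$ for all $n,k$ with $(n+1,k)\ne(0,0)$. *)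

(* Defs.v *)
From HB Require Import structures.
From mathcomp Require Import all_boot all_order all_algebra.
Set Implicit Arguments. Unset Strict Implicit. Unset Printing Implicit Defensive.
Import Order.TTheory GRing.Theory Num.Theory.
Local Open Scope ring_scope.

(* Integer-bounded product with the paper's convention:
   zprod l m A = A l * ... * A m              if m > l - 1,
               = 1                            if m = l - 1,
               = A (l-1)^-1 * ... * A (m+1)^-1 if m < l - 1. *)
Definition zprod (R : comUnitRingType) (l m : int) (A : int -> R) : R :=
  if (l - 1 <= m)%R then \prod_(i < absz (m - l + 1)%R) A (l + (i : nat)%:Z)%R
  else \prod_(i < absz (l - 1 - m)%R) (A (m + 1 + (i : nat)%:Z)%R)^-1.

Definition Wt (R : comUnitRingType) (v : int -> int -> R) (s t : int) : R :=
  zprod 1 t (fun j => v s j).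

Definition what (R : comUnitRingType) (w : int -> int -> R) : int -> int -> R :=
  fun s t => (w t s)^-1.

Definition is_wbinom (R : comUnitRingType) (v : int -> int -> R)
    (B : int -> int -> R) : Prop :=
  [/\ forall n : int, B n 0 = 1,
      forall n : int, B n n = 1 &
      forall n k : int, (n + 1, k) <> (0, 0) ->
        B (n + 1) k = B n k + B n (k - 1) * Wt v k (n + 1 - k)].

(* Main.v *)
Require Import Defs.
From HB Require Import structures.
From mathcomp Require Import all_boot all_order all_algebra.
From mathcomp Require Import zify ring.
Import Order.TTheory GRing.Theory Num.Theory.
Local Open Scope ring_scope.

Lemma int_ind2 (P : int -> Prop) : P 0 -> (forall k, P k -> P (k + 1)) ->
  (forall k, P k -> P (k - 1)) -> forall k, P k.
Proof.
move=> P0 Pu Pd [n|n].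
  elim: n => // n IH; have -> : (n.+1 : int) = n%:Z + 1 by lia.
  exact: Pu.
elim: n => [|n IH]; first by have := Pd _ P0; rewrite sub0r.
have -> : Negz n.+1 = Negz n - 1 by lia.
exact: Pd.
Qed.

Section Z.
Variable R : comUnitRingType.

Lemma zprod1E (m : int) (A : int -> R) : zprod 1 m A =
  if 0 <= m then \prod_(i < absz m) A (1 + (i : nat)%:Z)
  else \prod_(i < absz (- m)) (A (m + 1 + (i : nat)%:Z))^-1.
Proof. by rewrite /zprod subrr subrK sub0r. Qed.

Lemma zprod_ext (l m : int) (A B : int -> R) : (forall j, A j = B j) ->
  zprod l m A = zprod l m B.
Proof. by move=> e; rewrite /zprod; case: ifP => _; apply: eq_bigr => i _; rewrite e. Qed.

Lemma zp0 (A : int -> R) : zprod 1 0 A = 1.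
Proof. by rewrite zprod1E lexx big_ord0. Qed.

Lemma zpS (A : int -> R) : (forall j, A j \is a GRing.unit) -> forall k : int,
  zprod 1 k A = zprod 1 (k - 1) A * A k.
Proof.
move=> hA k; rewrite !zprod1E; case: k => [[|n]|n].
- rewrite lexx big_ord0 /= big_ord1 /=.
  by rewrite subrK addr0 mulVr.
- have -> : (0 <= (n.+1 : int)) = true by [].
  have -> : (n.+1%:Z - 1) = n%:Z by lia.
  rewrite /= big_ord_recr /=; congr (_ * A _); lia.
- have -> : (0 <= Negz n) = false by [].
  have -> : (0 <= Negz n - 1) = false by lia.
  have -> : absz (- (Negz n - 1)) = n.+2 by lia.
  have -> : absz (- (Negz n)) = n.+1 by lia.
  rewrite [in RHS]big_ord_recl /= [RHS]mulrC mulrA.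
  have -> : Negz n - 1 + 1 + 0%:Z = Negz n by lia.
  rewrite mulrV // mul1r; apply: eq_bigr => i _; congr (A _)^-1.
  rewrite /bump /=; lia.
Qed.

Lemma zp_unit (A : int -> R) k : (forall j, A j \is a GRing.unit) ->
  zprod 1 k A \is a GRing.unit.
Proof.
move=> hA; elim/int_ind2: k => [|k IH|k IH]; first by rewrite zp0 unitr1.
  by rewrite (zpS _ hA) addrK unitrM IH hA.
by move: IH; rewrite (zpS _ hA) unitrM => /andP[].
Qed.

Lemma zp_mul (A B : int -> R) k : (forall j, A j \is a GRing.unit) ->
  (forall j, B j \is a GRing.unit) ->
  zprod 1 k (fun j => A j * B j) = zprod 1 k A * zprod 1 k B.
Proof.
move=> hA hB; have hAB : forall j, A j * B j \is a GRing.unit.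
  by move=> j; rewrite unitrM hA hB.
elim/int_ind2: k => [|k IH|k IH]; first by rewrite !zp0 mulr1.
  rewrite (zpS _ hAB) (zpS _ hA) (zpS _ hB) !addrK IH; ring.
move: IH; rewrite (zpS _ hAB) (zpS _ hA) (zpS _ hB) => IH.
apply: (mulIr (hAB k)); rewrite IH; ring.
Qed.

Lemma zp1 k : zprod 1 k (fun _ => 1 : R) = 1.
Proof.
elim/int_ind2: k => [|k IH|k IH]; first by rewrite zp0.
  by rewrite (zpS _ (fun _ => unitr1 R)) addrK IH mulr1.
by move: IH; rewrite (zpS _ (fun _ => unitr1 R)) mulr1.
Qed.

Lemma Wt_unit (v : int -> int -> R) s t : (forall s t, v s t \is a GRing.unit) ->
  Wt v s t \is a GRing.unit.
Proof. by move=> hv; apply: zp_unit. Qed.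

Lemma wbinom_uniq (v : int -> int -> R) (hv : forall s t, v s t \is a GRing.unit)
  (E F : int -> int -> R) : is_wbinom v E -> is_wbinom v F -> forall n k, E n k = F n k.
Proof.
move=> [E0 En Er] [F0 Fn Fr].
pose D n k := E n k - F n k.
have D0 n : D n 0 = 0 by rewrite /D E0 F0 subrr.
have Dn n : D n n = 0 by rewrite /D En Fn subrr.
have Dr n k : (n + 1, k) <> (0, 0) ->
    D (n + 1) k = D n k + D n (k - 1) * Wt v k (n + 1 - k).
  by move=> h; rewrite /D Er // Fr //; ring.
have R1 n k : (n + 1, k) <> (0, 0) -> D (n + 1) k = 0 -> D n (k - 1) = 0 -> D n k = 0.
  by move=> h; rewrite Dr // => e1 e2; rewrite e2 mul0r addr0 in e1.
have R2 n k : (n + 1, k) <> (0, 0) -> D (n + 1) k = 0 -> D n k = 0 -> D n (k - 1) = 0.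
  move=> h; rewrite Dr // => e e2; rewrite e2 add0r in e.
  by apply: (mulIr (Wt_unit v k (n + 1 - k) hv)); rewrite e mul0r.
have R3 n k : (n + 1, k) <> (0, 0) -> D n k = 0 -> D n (k - 1) = 0 -> D (n + 1) k = 0.
  by move=> h; rewrite Dr // => -> ->; rewrite mul0r addr0.
have LA (j : nat) : forall n : int, 0 <= n -> D n (n + j%:Z) = 0.
  elim: j => [|j IH] n hn; first by rewrite addr0.
  apply: R1; first by case; lia.
    have -> : n + j.+1%:Z = (n + 1) + j%:Z by lia.
    by apply: IH; lia.
  have -> : n + j.+1%:Z - 1 = n + j%:Z by lia.
  exact: IH.
have LB (j : nat) : forall n : int, 0 <= n -> D n (- j%:Z) = 0.
  elim: j => [|j IH] n hn; first by rewrite oppr0.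
  have -> : - (j.+1%:Z) = - j%:Z - 1 by lia.
  apply: R2; first by case; lia.
    by apply: IH; lia.
  exact: IH.
have row0 k : D 0 k = 0.
  case: k => j; first by have := LA j 0 (lexx _); rewrite add0r.
  by have := LB j.+1 0 (lexx _); have -> : - (j.+1%:Z) = Negz j by lia.
have fwd (m : nat) : forall k, D m k = 0.
  elim: m => [|m IH] k; first exact: row0.
  have -> : (m.+1 : int) = m%:Z + 1 by lia.
  apply: R3; [by case; lia | exact: IH | exact: IH].
have bwd (m : nat) : forall k, D (- m%:Z) k = 0.
  elim: m => [|m IH]; first by move=> k; rewrite oppr0; apply: row0.
  have e : - (m.+1%:Z) + 1 = - m%:Z by lia.
  have up (i : nat) : D (- (m.+1%:Z)) i = 0.
    elim: i => [|i IHi]; first exact: D0.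
    have -> : (i.+1 : int) = i%:Z + 1 by lia.
    apply: R1; first by case; lia.
      by rewrite e.
    by rewrite addrK.
  have down (i : nat) : D (- (m.+1%:Z)) (- (i.+1%:Z)) = 0.
    elim: i => [|i IHi].
      case: m IH e up => [|m'] IH e up; first by apply: Dn.
      have -> : - (1%:Z) = 0 - 1 by [].
      apply: R2; first by case; lia.
        by rewrite e.
      exact: D0.
    have -> : - (i.+2%:Z) = - (i.+1%:Z) - 1 by lia.
    apply: R2; first by case; lia.
      by rewrite e.
    exact: IHi.
  case => j; first exact: up.
  by have -> : Negz j = - (j.+1%:Z) by lia.
move=> n k; apply/eqP; rewrite -subr_eq0; apply/eqP; rewrite -/(D n k).
case: n => m; first exact: fwd.
by have -> : Negz m = - (m.+1%:Z) by lia.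
Qed.

End Z.
Arguments zpS {R} A hA k. Arguments zprod_ext {R} l m A B e.
Arguments zp_mul {R} A B k hA hB. Arguments zp1 {R} k.
Arguments Wt_unit {R} v s t hv. Arguments wbinom_uniq {R} v hv E F hE hF n k.
Arguments zp_unit {R} A k hA. Arguments zp0 {R} A.

Theorem theorem5 (R : comUnitRingType) (w : int -> int -> R)
    (hw : forall s t : int, w s t \is a GRing.unit)
    (B Bh : int -> int -> R) :
  is_wbinom w B -> is_wbinom (what w) Bh ->
  forall n k : int,
    B n k = Bh n (n - k) * zprod 1 k (fun j => Wt w j (n - k)).
Proof.
move=> hB [Bh0 Bhn Bhr].
pose P n k := zprod 1 k (fun j => Wt w j (n - k)).
pose C n k := Bh n (n - k) * P n k.
have hWt : forall s t, Wt w s t \is a GRing.unit by move=> s t; apply: Wt_unit.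
have F1 n k : P (n + 1) k = P n (k - 1) * Wt w k (n + 1 - k).
  rewrite /P (zpS (fun j => Wt w j (n + 1 - k)) (fun j => hWt j _) k).
  by have -> : n - (k - 1) = n + 1 - k by lia.
have F2 n k : Wt (what w) (n + 1 - k) k * P (n + 1) k = P n k.
  rewrite /P.
  rewrite (zprod_ext _ _ _ (fun j => Wt w j (n - k) * w j (n + 1 - k))); last first.
    move=> j; rewrite /Wt (zpS _ (fun j' => hw j j')).
    by have -> : n + 1 - k - 1 = n - k by lia.
  rewrite zp_mul // mulrC -mulrA /Wt /what -zp_mul //; last by move=> j; rewrite unitrV.
  rewrite [X in _ * X](zprod_ext _ _ _ (fun _ => 1)) ?zp1 ?mulr1 //.
  by move=> j; rewrite mulrV.
have hC : is_wbinom w C.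
  split.
  - by move=> n; rewrite /C subr0 Bhn /P zp0 mulr1.
  - move=> n; rewrite /C subrr Bh0 mul1r /P (zprod_ext _ _ _ (fun _ => 1)) ?zp1 //.
    by move=> j; rewrite subrr /Wt zp0.
  - move=> n k h; rewrite /C.
    have f1 := F1 n k; have f2 := F2 n k.
    have e : n + 1 - k = n + (1 - k) by ring.
    rewrite e in f1 f2 *.
    rewrite Bhr; last by case=> e1 e2; apply: h; rewrite e1; congr (_, _); lia.
    have -> : n + (1 - k) - 1 = n - k by ring.
    have -> : n + 1 - (n + (1 - k)) = k by ring.
    have -> : n - (k - 1) = n + (1 - k) by ring.
    rewrite mulrDl -mulrA f2 f1.
    ring.
move=> n k; exact: (wbinom_uniq w hw _ _ hB hC).
Qed.
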